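(* Let $l_0\in\mathbb{N}$, let $\eta=(\eta_l)_{l\ge1}$ be a strictly positive sequence with $0<\sup_{l\ge l_0}\eta_l<1$, and let $S$ and the minimal $S$-majorant $\xi\mapsto\widehat{\xi}$ be as in the context. Then every nonnegative, nonincreasing, bounded sequence $\xi=(\xi_l)_{l\ge1}$ satisfies $$\sum_{l=1}^\infty\xi_l<\infty\iff\sum_{l=1}^\infty\widehat{\xi}_l<\infty .$$
   Context: $S$ is the set of real sequences $\sigma=(\sigma_l)_{l\ge1}$ such that (i) $\sigma_l\ge\sigma_{l+1}\ge0$ for all $l\in\mathbb{N}$, and (ii) $\sigma_l-\sigma_{l+1}\ge\eta_l(\sigma_{l-1}-\sigma_l)$ for all $l\ge l_0$ with $l\ge2$. For a bounded sequence $\xi$, a sequence $\sigma\in S$ is an $S$-majorant of $\xi$ if $\sigma_l\ge\xi_l$ for all $l\ge l_0$, and $\widehat{\xi}$ is the pointwise infimum of all $S$-majorants of $\xi$ (it belongs to $S$ and is the minimal $S$-majorant). *)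

(* Defs.v *)
From HB Require Import structures.
From mathcomp Require Import all_boot all_order all_algebra.
From mathcomp Require Import all_classical all_reals all_analysis.
Set Implicit Arguments. Unset Strict Implicit. Unset Printing Implicit Defensive.
Import Order.TTheory GRing.Theory Num.Theory.
Local Open Scope classical_set_scope.
Local Open Scope ring_scope.

(* Sequences are functions nat -> R; only indices l >= 1 are meaningful,
   the value at index 0 is ignored everywhere. *)

Definition inS {R : realType} (l0 : nat) (eta : nat -> R) (sigma : nat -> R) : Prop :=
  (forall l : nat, (1 <= l)%N -> sigma l >= sigma l.+1 /\ sigma l.+1 >= 0) /\
  (forall l : nat, (l0 <= l)%N -> (2 <= l)%N ->
     sigma l - sigma l.+1 >= eta l * (sigma l.-1 - sigma l)).

Definition S_majorant {R : realType} (l0 : nat) (eta : nat -> R) (xi sigma : nat -> R) : Prop :=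
  inS l0 eta sigma /\ (forall l : nat, (l0 <= l)%N -> (1 <= l)%N -> sigma l >= xi l).

Definition hat {R : realType} (l0 : nat) (eta : nat -> R) (xi : nat -> R) : nat -> R :=
  fun l => inf [set sigma l | sigma in [set sigma | S_majorant l0 eta xi sigma]].

(* Main.v *)
Require Import Defs.
From HB Require Import structures.
From mathcomp Require Import all_boot all_order all_algebra.
From mathcomp Require Import all_classical all_reals all_analysis.
From mathcomp Require Import lra.
Import Order.TTheory GRing.Theory Num.Theory.
Local Open Scope classical_set_scope.
Local Open Scope ring_scope.
Lemma ser_bnd (R : realType) (f : nat -> R) (f0 : forall l, (1 <= l)%N -> 0 <= f l) :
  ((\sum_(1 <= l <oo) (f l)%:E < +oo)%E <-> exists B : R, forall n, \sum_(1 <= l < n) f l <= B).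
Proof.
have f0' : forall n, (1 <= n)%N -> (0 <= (f n)%:E)%E by move=> n /f0; rewrite lee_fin.
split.
- move=> h; exists (fine (\sum_(1 <= l <oo) (f l)%:E)%E) => n.
  rewrite -lee_fin fineK; last first.
    by rewrite ge0_fin_numE // nneseries_ge0 // => k k1 _; exact: f0'.
  rewrite -sumEFin; apply: nneseries_lim_ge => k k1 _; exact: f0'.
- move=> [B hB]; apply: (@le_lt_trans _ _ B%:E); last exact: ltry.
  apply: lime_le; first by apply: is_cvg_nneseries => k k1 _; exact: f0'.
  by apply: nearW => n; rewrite sumEFin lee_fin.
Qed.


Section H.
Variable R : realType.
Variables (q : R) (xi : nat -> R).
Hypothesis q0 : 0 <= q.
Hypothesis q1 : q < 1.
Hypothesis xi_nneg : forall l : nat, (1 <= l)%N -> 0 <= xi l.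
Hypothesis xi_noninc : forall l : nat, (1 <= l)%N -> xi l.+1 <= xi l.

Definition ee l := if l is 0%N then 0 else xi l - xi l.+1.
Fixpoint TT n := match n with 0%N => 0 | m.+1 => q * (TT m + ee m) end.

Lemma ee_ge0 l : 0 <= ee l.
Proof. case: l => [|l] //=; rewrite subr_ge0; exact: xi_noninc. Qed.

Lemma TT_ge0 n : 0 <= TT n.
Proof. elim: n => [|n IH] //=; apply: mulr_ge0 => //; apply: addr_ge0 => //; exact: ee_ge0. Qed.

Lemma TT_inv n : (1 <= n)%N ->
  (1 - q) * (\sum_(1 <= l < n) TT l) + TT n = q * (xi 1 - xi n).
Proof.
elim: n => [//|n IH] _.
case: n IH => [|n] IH.
  rewrite big_geq //= /ee /=; lra.
rewrite big_nat_recr //= mulrDr.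
have := IH isT => /=; rewrite /ee => H.
lra.
Qed.

Lemma TT_sum n : \sum_(1 <= l < n) TT l <= q * xi 1 / (1 - q).
Proof.
case: n => [|n].
  rewrite big_geq //; apply: divr_ge0; first exact: mulr_ge0 q0 (xi_nneg 1 isT).
  by rewrite subr_ge0 ltW.
have := TT_inv n.+1 isT.
have := TT_ge0 n.+1; have := xi_nneg n.+1 isT => h1 h2 h3.
rewrite ler_pdivlMr ?subr_gt0 //.
have h4 := mulr_ge0 q0 h1.
lra.
Qed.


Lemma TTS n : TT n.+1 = q * (TT n + ee n). Proof. by []. Qed.
Lemma eeS n : ee n.+1 = xi n.+1 - xi n.+2. Proof. by []. Qed.

Definition uu l := xi l + TT l.

Variables (l0 : nat) (eta : nat -> R).
Hypothesis eta_le : forall l, (l0 <= l)%N -> (1 <= l)%N -> eta l <= q.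

Lemma uu_maj : S_majorant l0 eta xi uu.
Proof.
split; [split|].
- move=> [//|l] _; rewrite /uu (TTS l.+1).
  have h0 := TT_ge0 l.+1. have h1 := ee_ge0 l.+1.
  have h2 := xi_nneg l.+2 isT.
  have h3 : 0 <= (1 - q) * (TT l.+1 + ee l.+1).
    by apply: mulr_ge0; [rewrite subr_ge0 ltW|exact: addr_ge0].
  have h4 : 0 <= q * (TT l.+1 + ee l.+1).
    by apply: mulr_ge0; [|exact: addr_ge0].
  move: h1 h3 h4; rewrite eeS => h1 h3 h4.
  split; lra.
- move=> [|[|k]] // hl _; rewrite /uu (_ : k.+2.-1 = k.+1) // (TTS k.+2) (TTS k.+1).
  set x := (1 - q) * (TT k.+1 + ee k.+1).
  have hx : 0 <= x.
    by apply: mulr_ge0; [rewrite subr_ge0 ltW|apply: addr_ge0; [exact: TT_ge0|exact: ee_ge0]].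
  have h : eta k.+2 * x <= q * x by apply: ler_wpM2r => //; exact: eta_le.
  have he : 0 <= (1 - q) * ee k.+2.
    by apply: mulr_ge0; [rewrite subr_ge0 ltW|exact: ee_ge0].
  move: h he; rewrite /x !eeS => h he.
  lra.
- move=> l _ _; rewrite /uu lerDl; exact: TT_ge0.
Qed.
End H.


Theorem lemma23 (R : realType) (l0 : nat) (eta : nat -> R)
  (eta_pos : forall l : nat, (1 <= l)%N -> 0 < eta l)
  (sup_pos : 0 < sup [set eta l | l in [set l : nat | (l0 <= l)%N /\ (1 <= l)%N]])
  (sup_lt1 : sup [set eta l | l in [set l : nat | (l0 <= l)%N /\ (1 <= l)%N]] < 1)
  (xi : nat -> R)
  (xi_nneg : forall l : nat, (1 <= l)%N -> 0 <= xi l)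
  (xi_noninc : forall l : nat, (1 <= l)%N -> xi l.+1 <= xi l)
  (xi_bnd : exists M : R, forall l : nat, (1 <= l)%N -> `|xi l| <= M) :
  ((\sum_(1 <= l <oo) (xi l)%:E < +oo)%E <->
   (\sum_(1 <= l <oo) (hat l0 eta xi l)%:E < +oo)%E).
Proof.
set E := [set eta l | l in [set l : nat | (l0 <= l)%N /\ (1 <= l)%N]] in sup_pos sup_lt1.
set q := sup E in sup_pos sup_lt1.
have hs : has_sup E.
  split; first by exists (eta (maxn l0 1)), (maxn l0 1) => //; split; [exact: leq_maxl|exact: leq_maxr].
  apply: contrapT => hu; move: sup_pos; rewrite /q sup_out ?ltxx //.
  by case.
have eta_le : forall l, (l0 <= l)%N -> (1 <= l)%N -> eta l <= q.
  by move=> l h1 h2; apply: sup_upper_bound => //; exists l.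
have q0 : 0 <= q by exact: ltW.
set u := @uu R q xi.
have hmaj : S_majorant l0 eta xi u by apply: uu_maj.
set H := fun l => [set sigma l | sigma in [set sigma | S_majorant l0 eta xi sigma]].
have Hne l : H l !=set0 by exists (u l), (u).
have Hlb l : (1 <= l)%N -> lbound (H l) 0.
  move=> l1 _ [sigma [[hi _] _] <-]; have [h1 h2] := hi l l1; exact: le_trans h2 h1.
have hat_le l : (1 <= l)%N -> hat l0 eta xi l <= u l.
  move=> l1; apply: (ge_inf (E := H l)); first by exists 0; exact: Hlb.
  by exists (u).
have hat_ge0 l : (1 <= l)%N -> 0 <= hat l0 eta xi l.
  by move=> l1; apply: lb_le_inf; [exact: Hne|exact: Hlb].
have hat_ge l : (l0 <= l)%N -> (1 <= l)%N -> xi l <= hat l0 eta xi l.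
  move=> h0 l1; apply: lb_le_inf; first exact: Hne.
  by move=> _ [sigma [_ hm] <-]; exact: hm.
rewrite (@ser_bnd R xi xi_nneg) (@ser_bnd R _ hat_ge0).
split.
- move=> [B hB]; exists (B + q * xi 1 / (1 - q)) => n.
  apply: (@le_trans _ _ (\sum_(1 <= l < n) u l)).
    by apply: ler_sum_nat => i /andP[i1 _]; exact: hat_le.
  rewrite /u /uu big_split /=; apply: lerD; first exact: hB.
  by apply: TT_sum.
- move=> [B hB]; set L := maxn l0 1.
  exists (\sum_(1 <= l < L) xi l + B) => n.
  have hL1 : (1 <= L)%N by exact: leq_maxr.
  have hxs m p : (m <= p)%N -> (1 <= m)%N -> 0 <= \sum_(m <= l < p) xi l.
    move=> _ m1; rewrite big_nat_cond; apply: sumr_ge0 => i /andP[/andP[mi _] _].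
    by apply: xi_nneg; exact: leq_trans mi.
  have hhs m p : (1 <= m)%N -> 0 <= \sum_(m <= l < p) hat l0 eta xi l.
    move=> m1; rewrite big_nat_cond; apply: sumr_ge0 => i /andP[/andP[mi _] _].
    by apply: hat_ge0; exact: leq_trans mi.
  case: (leqP n L) => hn.
  + case: (leqP 1 n) => n1; last first.
      rewrite big_geq; last exact: ltnW.
      by apply: addr_ge0; [exact: hxs|exact: le_trans (hhs 1 1 isT) (hB 1)].
    rewrite (big_cat_nat n1 hn) /= -addrA lerDl.
    apply: addr_ge0; last exact: le_trans (hhs 1%N 1%N isT) (hB 1%N).
    exact: (hxs n L hn n1).
  + rewrite (big_cat_nat hL1 (ltnW hn)) /=; apply: lerD => //.
    apply: le_trans (hB n).
    rewrite (big_cat_nat hL1 (ltnW hn)) /= -[X in X <= _]add0r.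
    apply: lerD; first exact: hhs.
    apply: ler_sum_nat => i /andP[Li _]; apply: hat_ge.
      exact: leq_trans (leq_maxl l0 1) Li.
    exact: leq_trans hL1 Li.
Qed.
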